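(* Let $\lambda=\{\mathbf u_0,\dots,\mathbf u_{d-1}\}\subset\mathbb{Z}^n_{\ge0}$ be a finite downward-closed subset, enumerated so that $\mathbf u_0=0$ and each $\{\mathbf u_0,\dots,\mathbf u_k\}$ is downward closed. Define for $1\le m\le d-1$ $$W_T(\mathbf u_m)=\begin{cases}0&\text{if }\mathbf u_m=e_i\text{ for some }i,\\ \#\{(i,j):1\le i\le j\le d-1,\ \mathbf u_i+\mathbf u_j=\mathbf u_m\}-1&\text{otherwise,}\end{cases}$$ $$W_B(\mathbf u_m)=\#\{(i,j,k)\in\{1,\dots,d-1\}^3: i<k,\ \mathbf u_i+\mathbf u_j+\mathbf u_k=\mathbf u_m\}.$$ Then $W_T(\mathbf u_m)\le W_B(\mathbf u_m)$ for all $m=1,\dots,d-1$.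
   Context: A subset $\lambda\subset\mathbb{Z}^n_{\ge0}$ is downward closed if $\mathbf u\in\lambda$ and $0\le\mathbf v\le\mathbf u$ coordinatewise imply $\mathbf v\in\lambda$. $e_i$ denotes the $i$-th unit vector. (In the paper $\lambda$ arises as the largest partition of a nested partition with an enumeration compatible with the nesting.) *)

(* Defs.v *)
From mathcomp Require Import all_boot all_order all_algebra.
Set Implicit Arguments. Unset Strict Implicit. Unset Printing Implicit Defensive.

Definition pt (n : nat) := {ffun 'I_n -> nat}.

Definition pt0 (n : nat) : pt n := [ffun => 0%N].
Definition unitv (n : nat) (i : 'I_n) : pt n := [ffun j => (j == i : nat)].
Definition ptadd (n : nat) (u v : pt n) : pt n := [ffun j => (u j + v j)%N].
Definition ptle (n : nat) (u v : pt n) : Prop := forall j, (u j <= v j)%N.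

Definition downward_closed (n : nat) (S : pt n -> Prop) : Prop :=
  forall u v : pt n, S u -> ptle v u -> S v.

Definition prefix_set (n d : nat) (u : 'I_d -> pt n) (k : nat) : pt n -> Prop :=
  fun v => exists i : 'I_d, (i <= k)%N /\ u i = v.

Definition W_T (n d : nat) (u : 'I_d -> pt n) (m : 'I_d) : int :=
  if [exists i : 'I_n, u m == unitv i] then 0%R
  else ((#|[set p : 'I_d * 'I_d |
              [&& (1 <= p.1)%N, (p.1 <= p.2)%N & ptadd (u p.1) (u p.2) == u m]]|)%:Z
        - 1)%R.

Definition W_B (n d : nat) (u : 'I_d -> pt n) (m : 'I_d) : nat :=
  #|[set t : 'I_d * 'I_d * 'I_d |
      [&& (1 <= t.1.1)%N, (1 <= t.1.2)%N, (1 <= t.2)%N, (t.1.1 < t.2)%N &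
          ptadd (ptadd (u t.1.1) (u t.1.2)) (u t.2) == u m]]|.

(* Main.v *)
Require Import Defs.
From mathcomp Require Import all_boot all_order all_algebra.
From mathcomp Require Import zify.
Set Implicit Arguments. Unset Strict Implicit.

Definition cf n (k : 'I_n) (c : nat) : pt n := [ffun t => if t == k then c else 0%N].



Lemma bad_unique n (ka kb ka' kb' : 'I_n) ca cb ca' cb' :
  (0 < ca <= 2)%N -> (0 < cb <= 2)%N -> (0 < ca' <= 2)%N -> (0 < cb' <= 2)%N ->
  ptadd (cf ka ca) (cf kb cb) = ptadd (cf ka' ca') (cf kb' cb') ->
  (cf ka ca = cf ka' ca' /\ cf kb cb = cf kb' cb') \/
  (cf ka ca = cf kb' cb' /\ cf kb cb = cf ka' ca').
Proof.
move=> h1 h2 h3 h4 /ffunP H.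
have Ha' : (ka' == ka) || (ka' == kb).
  apply/negPn/negP; rewrite negb_or => /andP[n1 n2]; move: (H ka').
  rewrite !ffunE eqxx (negbTE n1) (negbTE n2); lia.
have Hb' : (kb' == ka) || (kb' == kb).
  apply/negPn/negP; rewrite negb_or => /andP[n1 n2]; move: (H kb').
  rewrite !ffunE eqxx (negbTE n1) (negbTE n2); lia.
move: H; case/orP: Ha' => /eqP ->; case/orP: Hb' => /eqP -> H;
have H1 := H ka; have H2 := H kb; clear H; move: H1 H2;
(case: (eqVneq ka kb) => [<-|nab];
  rewrite !ffunE ?eqxx ?(eq_sym kb ka) ?(negbTE nab) /= => H1 H2);
first [ exfalso; lia
      | left; split; f_equal; lia
      | right; split; f_equal; lia
      | (have [[? ?]|[? ?]] : (ca = ca' /\ cb = cb') \/ (ca = cb' /\ cb = ca') by lia); subst; by [left | right] ].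
Qed.


Definition ptsub n (b v : pt n) : pt n := [ffun j => b j - v j].
Definition splitk n (b : pt n) k :=
  [&& 0 < b k, ptsub b (unitv k) != pt0 n & ptsub b (unitv k) != unitv k].
Definition splits n (b : pt n) := [exists k, splitk b k].

Lemma unsplit_form n (b : pt n) : b != pt0 n -> ~~ splits b ->
  exists k c, (0 < c <= 2) /\ b = cf k c.
Proof.
move=> nz ns.
have [k hk] : exists k, 0 < b k.
  case: (pickP (fun k => 0 < b k)) => [k hk|h]; first by exists k.
  move/eqP: nz; elim; apply/ffunP=> j; rewrite ffunE; move: (h j) => /=; lia.
move/existsPn: ns => /(_ k); rewrite /splitk hk /= negb_and !negbK => /orP [/eqP e|/eqP e].
- exists k, 1; split => //; apply/ffunP=> j; have := congr1 (fun f : pt n => f j) e;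
  have := congr1 (fun f : pt n => f k) e; rewrite !ffunE eqxx /=; case: eqP => [->|] /=; lia.
- exists k, 2; split => //; apply/ffunP=> j; have := congr1 (fun f : pt n => f j) e;
  have := congr1 (fun f : pt n => f k) e; rewrite !ffunE eqxx /=; case: eqP => [->|] /=; lia.
Qed.

Definition Pset n d (u : 'I_d -> pt n) m := [set p : 'I_d * 'I_d |
              [&& (1 <= p.1)%N, (p.1 <= p.2)%N & ptadd (u p.1) (u p.2) == u m]].
Definition Tset n d (u : 'I_d -> pt n) m := [set t : 'I_d * 'I_d * 'I_d |
      [&& (1 <= t.1.1)%N, (1 <= t.1.2)%N, (1 <= t.2)%N, (t.1.1 < t.2)%N &
          ptadd (ptadd (u t.1.1) (u t.1.2)) (u t.2) == u m]].

Lemma nonzero n d (u : 'I_d -> pt n) (u_inj : injective u)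
  (u_first : forall i : 'I_d, nat_of_ord i = 0%N -> u i = pt0 n) (i : 'I_d) :
  1 <= i -> u i != pt0 n.
Proof.
move=> hi; apply/eqP => e.
have i0p : 0 < d by apply: leq_ltn_trans (ltn_ord i).
have := u_first (Ordinal i0p) erefl; rewrite -e => /u_inj /(congr1 val) /=; lia.
Qed.

Lemma get_idx n d (u : 'I_d -> pt n)
  (u_prefix : forall k : nat, (k < d)%N -> downward_closed (prefix_set u k)) (m : 'I_d) v :
  ptle v (u m) -> exists i, u i = v.
Proof.
move=> hv; have := u_prefix m (ltn_ord m) (u m) v.
case; [by exists m | done | move=> i [_ e]; by exists i].
Qed.

Lemma ptaddC n (a b : pt n) : ptadd a b = ptadd b a.
Proof. by apply/ffunP => j; rewrite !ffunE addnC. Qed.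


Lemma exB n d (u : 'I_d -> pt n) (u_inj : injective u)
  (u_first : forall i : 'I_d, nat_of_ord i = 0%N -> u i = pt0 n)
  (u_prefix : forall k : nat, (k < d)%N -> downward_closed (prefix_set u k)) (m y o : 'I_d) :
  1 <= y -> ptadd (u y) (u o) = u m -> splits (u o) ->
  exists t, t \in Tset u m /\ t.1.2 = y.
Proof.
move=> hy hs /existsP [k /and3P [hk nz ne]].
have hm j : u m j = u y j + u o j by rewrite -hs ffunE.
have [ix hix] : exists ix, u ix = unitv k.
  apply: (get_idx u_prefix (m:=m)) => j; rewrite hm ffunE; case: eqP => [->|] /=; lia.
have [iz hiz] : exists iz, u iz = ptsub (u o) (unitv k).
  apply: (get_idx u_prefix (m:=m)) => j; rewrite hm ffunE; lia.
have nzx : 1 <= ix.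
  case: (posnP ix) => // h0; have := u_first _ h0; rewrite hix => /(congr1 (fun f : pt n => f k)).
  rewrite !ffunE eqxx //.
have nzz : 1 <= iz.
  case: (posnP iz) => // h0; have := u_first _ h0; rewrite hiz => e; by rewrite e eqxx in nz.
have nxz : ix != iz.
  apply/eqP => e; move: ne; by rewrite -hiz -hix e eqxx.
have hsum j : u ix j + u y j + u iz j = u m j.
  rewrite hix hiz hm !ffunE; case: eqP => [->|] /=; lia.
case: (ltngtP ix iz) => [lt|gt|eq]; last by move: nxz; rewrite (val_inj eq) eqxx.
- exists ((ix, y), iz); split => //; rewrite inE /= nzx hy nzz lt /=.
  by apply/eqP/ffunP => j; rewrite !ffunE.
- exists ((iz, y), ix); split => //; rewrite inE /= nzx hy nzz gt /=.
  apply/eqP/ffunP => j; rewrite !ffunE -hsum; lia.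
Qed.


Lemma canc n (x y1 y2 : pt n) : ptadd x y1 = ptadd x y2 -> y1 = y2.
Proof. move/ffunP => h; apply/ffunP => j; move: (h j); rewrite !ffunE; exact: addnI. Qed.

Lemma pair_eq d (a b a' b' : 'I_d) : nat_of_ord a = a' -> nat_of_ord b = b' -> (a, b) = (a', b').
Proof. by move=> /val_inj -> /val_inj ->. Qed.

Lemma detA n d (u : 'I_d -> pt n) (u_inj : injective u) m (p p' : 'I_d * 'I_d) y :
  p \in Pset u m -> p' \in Pset u m -> (y == p.1) || (y == p.2) ->
  (y == p'.1) || (y == p'.2) -> p = p'.
Proof.
case: p p' => [a b] [a' b']; rewrite !inE /= => /and3P[_ hab /eqP s] /and3P[_ hab' /eqP s'].
rewrite -s' in s.
case/orP => /eqP ->; case/orP => /eqP e.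
- subst a'; move/canc/u_inj: s => ->; done.
- subst b'; rewrite (ptaddC (u a')) in s; move/canc/u_inj: s => e.
  subst a'; apply: pair_eq; lia.
- subst a'; rewrite (ptaddC (u a)) in s; move/canc/u_inj: s => e.
  subst b'; apply: pair_eq; lia.
- subst b'; rewrite (ptaddC (u a)) (ptaddC (u a')) in s; move/canc/u_inj: s => e.
  by subst a'.
Qed.

Lemma badC n d (u : 'I_d -> pt n) (u_inj : injective u)
  (u_first : forall i : 'I_d, nat_of_ord i = 0%N -> u i = pt0 n) m (p p' : 'I_d * 'I_d) :
  p \in Pset u m -> p' \in Pset u m -> ~~ splits (u p.1) -> ~~ splits (u p.2) ->
  ~~ splits (u p'.1) -> ~~ splits (u p'.2) -> p = p'.
Proof.
move=> hp hp'; move: (hp) (hp'); case: p hp => [a b] hp; case: p' hp' => [a' b'] hp'.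
rewrite !inE /= => /and3P[ha hab /eqP s] /and3P[ha' hab' /eqP s'] n1 n2 n3 n4.
have hb : 1 <= b by apply: leq_trans hab.
have hb' : 1 <= b' by apply: leq_trans hab'.
have [ka [ca [hca ea]]] := unsplit_form (nonzero u_inj u_first ha) n1.
have [kb [cb [hcb eb]]] := unsplit_form (nonzero u_inj u_first hb) n2.
have [ka' [ca' [hca' ea']]] := unsplit_form (nonzero u_inj u_first ha') n3.
have [kb' [cb' [hcb' eb']]] := unsplit_form (nonzero u_inj u_first hb') n4.
have := @bad_unique n ka kb ka' kb' ca cb ca' cb' hca hcb hca' hcb'.
rewrite -ea -eb -ea' -eb' s s' => /(_ erefl) [[/u_inj e1 /u_inj e2]|[/u_inj e1 /u_inj e2]].
- by subst.
- subst; apply: pair_eq; lia.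
Qed.


Theorem mainTheorem17 (n d : nat) (u : 'I_d -> pt n)
  (u_inj : injective u)
  (u_first : forall i : 'I_d, nat_of_ord i = 0%N -> u i = pt0 n)
  (u_prefix : forall k : nat, (k < d)%N -> downward_closed (prefix_set u k)) :
  forall m : 'I_d, (1 <= m)%N -> (W_T u m <= (W_B u m)%:Z)%R.
Proof.
move=> m hm; rewrite /W_T /W_B; case: ifP => _; first by lia.
change (#|Pset u m|%:Z - 1 <= #|Tset u m|%:Z)%R.
suff : (#|Pset u m| <= #|Tset u m| + 1)%N by lia.
set S := [set p : 'I_d * 'I_d | splits (u p.1) || splits (u p.2)].
rewrite -(cardsID S (Pset u m)).
have bad1 : (#|Pset u m :\: S| <= 1)%N.
  apply/card_le1_eqP => x y; rewrite !in_setD => /andP[nx px] /andP[ny py].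
  move: nx ny; rewrite !inE !negb_or => /andP[n1 n2] /andP[n3 n4].
  symmetry; exact: (badC u_inj u_first px py).
have good : (#|Pset u m :&: S| <= #|Tset u m|)%N.
  pose f p := odflt ((m, m), m) [pick t in Tset u m | (t.1.2 == p.1) || (t.1.2 == p.2)].
  have fP p : p \in Pset u m :&: S ->
      f p \in Tset u m /\ ((f p).1.2 == p.1) || ((f p).1.2 == p.2).
    rewrite in_setI => /andP[hp]; rewrite inE => hS; rewrite /f; case: pickP => [t /andP[ht hy] | h] /=; first by [].
    exfalso; move: hp hS h; case: p => [a b] /=; rewrite inE /= => /and3P[ha hab /eqP s] /orP[sa|sb] h.
    + have hb : (1 <= b)%N by apply: leq_trans hab.
      rewrite ptaddC in s.
      have [t [ht ty]] := exB u_inj u_first u_prefix hb s sa.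
      by move: (h t); rewrite ht ty eqxx orbT.
    + have [t [ht ty]] := exB u_inj u_first u_prefix ha s sb.
      by move: (h t); rewrite ht ty eqxx.
  rewrite -(card_in_imset (f := f)).
    apply: subset_leq_card; apply/subsetP => t /imsetP [p hp ->]; by case: (fP p hp).
  move=> p q hp hq e.
  have [_ h1] := fP p hp; have [_ h2] := fP q hq.
  rewrite e in h1.
  move: hp hq; rewrite !in_setI => /andP[hp _] /andP[hq _].
  exact: (detA u_inj hp hq h1 h2).
lia.
Qed.
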